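(* Let $\mathcal R_f,\mathcal R_g$ be constructible Reeb graphs. Then $d_{FD}(\mathcal R_f,\mathcal R_g)=\infty$ if and only if $\mathcal R_f$ and $\mathcal R_g$ have different numbers of path-connected components.
   Context: Reeb graph $\mathcal R_f=(\mathbb X_f,\tilde f)$: quotient of a scalar field identifying points in the same path component of a level set; constructible = built from finitely many compact locally path-connected slices over critical values (a finite graph, possibly disconnected). $d_f(u,v)=\min_{\pi:u\to v}(\max_\pi\tilde f-\min_\pi\tilde f)$ over continuous paths, with $d_f(u,v)=\infty$ when no path exists. $d_{FD}(\mathcal R_f,\mathcal R_g)=\inf_{\Phi,\Psi}\max\{D(\Phi,\Psi),\|\tilde f-\tilde g\circ\Phi\|_\infty,\|\tilde f\circ\Psi-\tilde g\|_\infty\}$ over continuous $\Phi:\mathcal R_f\to\mathcal R_g,\Psi:\mathcal R_g\to\mathcal R_f$, where $D(\Phi,\Psi)=\sup\tfrac12|d_f(x,x')-d_g(y,y')|$ over pairs in $\{(x,\Phi(x))\}\cup\{(\Psi(y),y)\}$. *)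

(* Defs.v *)
From HB Require Import structures.
From mathcomp Require Import all_boot all_order all_algebra generic_quotient.
From mathcomp Require Import all_classical all_reals all_analysis.
Set Implicit Arguments. Unset Strict Implicit. Unset Printing Implicit Defensive.
Import Order.TTheory GRing.Theory Num.Theory.
Import numFieldNormedType.Exports.
Local Open Scope classical_set_scope.
Local Open Scope ring_scope.

(* Geometric realization of a finite "Reeb graph datum":                    *)
(*   finitely many vertices v : V with heights h v, finitely many edges      *)
(*   e : E going from src e to tgt e with h (src e) < h (tgt e)             *)
(*   (multi-edges allowed, graph possibly disconnected).                    *)
(* The realization is the quotient of the disjoint union of copies of R,    *)
(* one per vertex and one per edge, where the copy of a vertex is collapsed *)
(* to that vertex and the copy of an edge e is collapsed onto the segment    *)
(* [h (src e), h (tgt e)] (the two rays being collapsed to the endpoint     *)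
(* vertices).  Collapsing the rays is a retraction, hence a quotient map,   *)
(* so this is exactly the usual quotient-topology realization.              *)
Section Realization.
Variables (R : realType) (V E : finType) (h : V -> R) (src tgt : E -> V).

Definition rg_base := {i : (V + E)%type & R}.

Definition rg_canon (x : rg_base) : (V + (E * R))%type :=
  let: existT i t := x in
  match i with
  | inl v => inl v
  | inr e => if t <= h (src e) then inl (src e)
             else if h (tgt e) <= t then inl (tgt e)
             else inr (e, t)
  end.

Definition rg_rel : rel rg_base := fun x y => rg_canon x == rg_canon y.

Lemma rg_rel_refl : reflexive rg_rel. Proof. by move=> x; rewrite /rg_rel. Qed.
Lemma rg_rel_sym : symmetric rg_rel.
Proof. by move=> x y; rewrite /rg_rel eq_sym. Qed.
Lemma rg_rel_trans : transitive rg_rel.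
Proof. by move=> y x z; rewrite /rg_rel => /eqP -> /eqP ->. Qed.

Canonical rg_equiv := EquivRel rg_rel rg_rel_refl rg_rel_sym rg_rel_trans.

Local Open Scope quotient_scope.
Notation realization := (quotient_topology {eq_quot rg_equiv}).

Definition rg_height (p : (V + (E * R))%type) : R :=
  match p with inl v => h v | inr (_, t) => t end.

Definition realization_fun (q : realization) : R :=
  rg_height (rg_canon (repr q)).
End Realization.

Definition fun_homeomorphic {R : realType} {X Y : topologicalType}
  (f : X -> R) (g : Y -> R) : Prop :=
  exists (phi : X -> Y) (psi : Y -> X),
    [/\ continuous phi, continuous psi, cancel phi psi, cancel psi phi
      & forall x, f x = g (phi x)].

Definition constructible_reeb {R : realType} {X : topologicalType}
  (f : X -> R) : Prop :=
  exists (V E : finType) (h : V -> R) (src tgt : E -> V),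
    (forall e, h (src e) < h (tgt e)) /\
    fun_homeomorphic f (@realization_fun R V E h src tgt).

Definition is_path {R : realType} {X : topologicalType} (p : R -> X) (u v : X) :=
  [/\ {within `[0, 1], continuous p}, p 0 = u & p 1 = v].

Definition path_conn {R : realType} (X : topologicalType) (u v : X) : Prop :=
  exists p : R -> X, is_path p u v.

Definition path_components (R : realType) (X : topologicalType) : set (set X) :=
  [set [set y | @path_conn R X x y] | x in [set: X]].

Definition path_height {R : realType} {X : topologicalType}
  (f : X -> R) (p : R -> X) : R :=
  sup [set f (p t) | t in `[0, 1]] - inf [set f (p t) | t in `[0, 1]].

Local Open Scope ereal_scope.

(* d_f(u,v), = +oo when no path exists (inf of the empty set) *)
Definition reeb_dist {R : realType} {X : topologicalType} (f : X -> R) (u v : X)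
  : \bar R :=
  ereal_inf [set (path_height f p)%:E | p in [set p : R -> X | is_path p u v]].

(* |a - b| on \bar R with the convention |+oo - +oo| = 0 *)
Definition eabsdiff {R : realType} (a b : \bar R) : \bar R :=
  if (a == +oo) && (b == +oo) then 0 else `|a - b|.

Definition distortion {R : realType} {X Y : topologicalType}
  (f : X -> R) (g : Y -> R) (Phi : X -> Y) (Psi : Y -> X) : \bar R :=
  let G := [set xy : X * Y | xy.2 = Phi xy.1 \/ xy.1 = Psi xy.2] in
  ereal_sup [set (2^-1)%:E * eabsdiff (reeb_dist f a.1.1 a.2.1)
                                      (reeb_dist g a.1.2 a.2.2)
            | a in [set a : (X * Y) * (X * Y) | G a.1 /\ G a.2]].

Definition sup_dist {R : realType} {Z : Type} (u v : Z -> R) : \bar R :=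
  ereal_sup [set `|u z - v z|%:E | z in [set: Z]].

Definition d_FD {R : realType} {X Y : topologicalType}
  (f : X -> R) (g : Y -> R) : \bar R :=
  ereal_inf [set maxe (distortion f g PP.1 PP.2)
                      (maxe (sup_dist f (g \o PP.1)) (sup_dist (f \o PP.2) g))
            | PP in [set PP : (X -> Y) * (Y -> X) |
                     continuous PP.1 /\ continuous PP.2]].

(* Main.v *)
Require Import Defs.
From HB Require Import structures.
From mathcomp Require Import all_boot all_order all_algebra generic_quotient.
From mathcomp Require Import all_classical all_reals all_analysis.
From mathcomp Require Import lra.
Import Order.TTheory GRing.Theory Num.Theory.
Import numFieldNormedType.Exports.
Local Open Scope classical_set_scope.
Local Open Scope ring_scope.

Section Paths.
Context {R : realType} {X : topologicalType}.

Lemma within_compR (A B : set R) (phi : R -> R) (a : R -> X) :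
  continuous phi -> (forall t, A t -> B (phi t)) ->
  {within B, continuous a} -> {within A, continuous (a \o phi)}.
Proof.
move=> cphi AB /subspace_continuousP ca; apply/subspace_continuousP => x Ax.
have H : phi @ within A (nbhs x) --> within B (nbhs (phi x)).
  move=> S hS.
  have h1 : nbhs x (fun z => B (phi z) -> S (phi z)) := cphi x _ hS.
  change (nbhs x (fun z => A z -> S (phi z))).
  by apply: (filterS _ h1) => z hz Az; apply/hz/AB.
exact: (@cvg_comp _ _ _ phi (from_subspace B a) _ _ _ H (ca _ (AB _ Ax))).
Qed.

Lemma within_compL (Y : topologicalType) (A : set R) (p : R -> X) (F : X -> Y) :
  continuous F -> {within A, continuous p} -> {within A, continuous (F \o p)}.
Proof.
move=> cF cp x.
exact: (@continuous_comp (subspace A) X Y (from_subspace A p) F x (cp x) (cF _)).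
Qed.

Lemma cont_aff (a b : R) : continuous (fun t : R => a * t + b).
Proof.
move=> x; apply: (@continuousD _ _ _ (fun t => a * t) (fun=> b)); last exact: cst_continuous.
apply: (@continuousM _ _ (fun=> a) id); [exact: cst_continuous | exact: cvg_id].
Qed.

Lemma pc_refl (u : X) : @path_conn R X u u.
Proof.
exists (fun=> u); split => //; apply: continuous_subspaceT; exact: cst_continuous.
Qed.

Lemma pc_sym (u v : X) : @path_conn R X u v -> @path_conn R X v u.
Proof.
move=> [p [cp p0 p1]]; exists (p \o (fun t => -1 * t + 1)); split.
- apply: within_compR cp; first exact: cont_aff.
  by move=> t; rewrite /= !in_itv /= => /andP[t0 t1]; apply/andP; split; lra.
- by rewrite /= mulr0 add0r.
- by rewrite /= mulN1r addNr.
Qed.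

Lemma itv_split : `[0, 1]%classic = `[0, 2^-1]%classic `|` `[2^-1, 1]%classic :> set R.
Proof.
apply/seteqP; split => t /=; rewrite !in_itv /=.
  move=> /andP[t0 t1]; have [ht|ht] := lerP t (2^-1 : R); [left|right].
    by apply/andP; split; lra.
  by apply/andP; split; lra.
by case=> /andP[t0 t1]; apply/andP; split; lra.
Qed.

Lemma pc_trans (u v w : X) :
  @path_conn R X u v -> @path_conn R X v w -> @path_conn R X u w.
Proof.
move=> [p [cp p0 p1]] [q [cq q0 q1]].
have h1 : ~~ ((1:R) <= 2^-1) by rewrite -ltNge; lra.
have h2 : (0:R) <= 2^-1 by lra.
have e1 : 2 * 1 + -1 = 1 :> R by lra.
have e2 : 2 * 2^-1 + 0 = 1 :> R by lra.
have e3 : 2 * 2^-1 + -1 = 0 :> R by lra.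
exists (fun t => if t <= 2^-1 then p (2 * t + 0) else q (2 * t + -1)); split; last first.
- by rewrite ifF ?e1 //; apply/negbTE.
- by rewrite ifT ?mulr0 ?addr0.
rewrite itv_split.
apply: withinU_continuous; [exact: interval_closed | exact: interval_closed | |].
- apply: (@subspace_eq_continuous _ _ _ (p \o (fun t => 2 * t + 0))).
    move=> t; rewrite inE /= in_itv /= => /andP[t0 t1].
    by rewrite /from_subspace ifT.
  apply: (@within_compR `[0, 2^-1]%classic _ _ _ (cont_aff 2 0) _ cp).
  by move=> t; rewrite /= !in_itv /= => /andP[t0 t1]; apply/andP; split; lra.
- apply: (@subspace_eq_continuous _ _ _ (q \o (fun t => 2 * t + -1))).
    move=> t; rewrite inE /= in_itv /= => /andP[t0 t1].
    rewrite /from_subspace; case: ifPn => // ht.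
    have -> : t = 2^-1 by apply/eqP; rewrite eq_le ht t0.
    by rewrite /= e2 e3 p1 q0.
  apply: (@within_compR `[2^-1, 1]%classic _ _ _ (cont_aff 2 (-1)) _ cq).
  by move=> t; rewrite /= !in_itv /= => /andP[t0 t1]; apply/andP; split; lra.
Qed.
End Paths.
Arguments pc_sym {R X u v}.
Arguments pc_trans {R X u v w}.

Section Real.
Context {R : realType} (V E : finType) (h : V -> R) (src tgt : E -> V).
Local Open Scope quotient_scope.
Local Notation Q := (quotient_topology {eq_quot (rg_equiv h src tgt)}).
Lemma realization_fun_bound (q : Q) :
  `|realization_fun q| <= \big[Num.max/0]_v `|h v|.
Proof.
rewrite /realization_fun; case: (repr q) => -[v|e] t /=.
  exact: le_bigmax.
case: ifPn => hs /=; first exact: le_bigmax.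
case: ifPn => ht /=; first exact: le_bigmax.
have := le_bigmax 0 (fun v => `|h v|) (src e).
have := le_bigmax 0 (fun v => `|h v|) (tgt e).
rewrite -ltNge in hs; rewrite -ltNge in ht.
move: hs ht; set B := \big[_/_]_(_ | _) _.
rewrite /= !ler_norml => hs ht /andP[a1 a2] /andP[b1 b2].
by apply/andP; split; lra.
Qed.

Lemma copy_pc (i : (V + E)%type) (s t : R) :
  @path_conn R Q (\pi_Q (existT _ i s)) (\pi_Q (existT _ i t)).
Proof.
exists (fun r => \pi_Q (existT (fun=> R) i ((t - s) * r + s))); split.
- apply: continuous_subspaceT => r.
  apply: (@continuous_comp _ _ _ (fun r => existT (fun=> R) i ((t - s) * r + s))); last exact: pi_continuous.
  apply: (@continuous_comp _ _ _ (fun r => (t - s) * r + s)); last exact: existT_continuous.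
  move: r; apply: cont_aff.
- by rewrite mulr0 add0r.
- by rewrite mulr1 subrK.
Qed.

Lemma Q_cont (Z : topologicalType) (F : Q -> Z) :
  (forall i s t, F (\pi_Q (existT _ i s)) = F (\pi_Q (existT _ i t))) ->
  continuous F.
Proof.
move=> hF; apply/quotient_continuous.
have -> : F \o \pi_Q = unstable.sigT_fun (fun i (_ : R) => F (\pi_Q (existT (fun=> R) i 0))).
  by apply: funext => -[i t] /=; rewrite (hF i t 0).
by apply: sigT_continuous => i; exact: cst_continuous.
Qed.
End Real.

Section Gen.
Context {R : realType}.

Lemma pc_map (Z W : topologicalType) (G : Z -> W) (u v : Z) :
  continuous G -> @path_conn R Z u v -> @path_conn R W (G u) (G v).
Proof.
move=> cG [p [cp p0 p1]]; exists (G \o p); split.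
- exact: within_compL.
- by rewrite /= p0.
- by rewrite /= p1.
Qed.

Lemma cr_bound (X : topologicalType) (f : X -> R) :
  constructible_reeb f -> exists B, 0 <= B /\ forall x, `|f x| <= B.
Proof.
move=> [V [E [h [src [tgt [_ [phi [psi [cphi cpsi phK psK hf]]]]]]]]].
exists (\big[Num.max/0]_v `|h v|); split.
  exact: bigmax_ge_id.
by move=> x; rewrite hf; exact: realization_fun_bound.
Qed.

Lemma cr_cont (X Z : topologicalType) (f : X -> R) (F : X -> Z) :
  constructible_reeb f ->
  (forall x x', @path_conn R X x x' -> F x = F x') -> continuous F.
Proof.
move=> [V [E [h [src [tgt [_ [phi [psi [cphi cpsi phK psK hf]]]]]]]]] hF.
have -> : F = (F \o psi) \o phi by apply: funext => x; rewrite /= phK.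
move=> x; apply: continuous_comp; first exact: cphi.
apply: Q_cont => i s t /=; apply: hF.
apply: (@pc_map _ _ psi); [exact: cpsi | exact (@copy_pc R V E h src tgt i s t)].
Qed.
End Gen.

Section Dist.
Context {R : realType} {X : topologicalType} (f : X -> R) (B : R)
  (Bf : forall x, `|f x| <= B).

Lemma ph_bounds (p : R -> X) : 0 <= path_height f p <= 2 * B.
Proof.
set S := [set f (p t) | t in `[0, 1]%classic].
have S0 : S (f (p 0)) by exists 0 => //=; rewrite in_itv /= lexx ler01.
have ub : ubound S B by move=> _ [t _ <-]; have := Bf (p t); rewrite ler_norml => /andP[].
have lb : lbound S (- B) by move=> _ [t _ <-]; have := Bf (p t); rewrite ler_norml => /andP[].
have s1 : sup S <= B by apply: ge_sup => //; exists (f (p 0)).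
have i1 : - B <= inf S by apply: lb_le_inf => //; exists (f (p 0)).
have s2 : f (p 0) <= sup S by apply: sup_upper_bound => //; split; [exists (f (p 0)) | exists B].
have i2 : inf S <= f (p 0) by apply: ge_inf => //; exists (- B).
rewrite /path_height -/S; apply/andP; split; lra.
Qed.

Lemma rd_fin (u v : X) : @path_conn R X u v ->
  exists r, reeb_dist f u v = r%:E /\ 0 <= r <= 2 * B.
Proof.
move=> [p hp].
have h0 : (0%:E <= reeb_dist f u v)%E.
  apply/ereal_infP => y [q hq <-]; rewrite lee_fin.
  by have /andP[] := ph_bounds q.
have h1 : (reeb_dist f u v <= (path_height f p)%:E)%E.
  by apply: ereal_inf_lbound; exists p.
have hfin : reeb_dist f u v \is a fin_num.
  by rewrite ge0_fin_numE //; apply: le_lt_trans h1 _; exact: ltry.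
exists (fine (reeb_dist f u v)); split; first by rewrite fineK.
apply/andP; split; first by rewrite -lee_fin fineK.
have /andP[_ hb] := ph_bounds p.
by rewrite -lee_fin fineK //; apply: le_trans h1 _; rewrite lee_fin.
Qed.

Lemma rd_inf (u v : X) : ~ @path_conn R X u v -> reeb_dist f u v = +oo%E.
Proof.
move=> npc; rewrite /reeb_dist.
have -> : [set (path_height f p)%:E | p in [set p : R -> X | is_path p u v]] = set0.
  by apply/seteqP; split => // y [p hp _]; exfalso; apply: npc; exists p.
exact: ereal_inf0.
Qed.
End Dist.

Section Comps.
Context {R : realType} {X : topologicalType}.
Local Notation pc := (@path_conn R X).

Definition comp_of (x : X) : set X := [set y | pc x y].

Lemma comp_eq (x y : X) : comp_of x = comp_of y <-> pc x y.
Proof.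
split=> [e|p].
  have : comp_of y y by exact: pc_refl.
  by rewrite -e.
apply/seteqP; split => z /=.
  by move=> pxz; apply: pc_trans (pc_sym p) pxz.
by move=> pyz; apply: pc_trans p pyz.
Qed.

Lemma comp_in (x : X) : @path_components R X (comp_of x).
Proof. by exists x. Qed.

Lemma comp_mem (C : set X) : @path_components R X C -> {x | C = comp_of x}.
Proof. by move=> hC; apply: cid; case: hC => x _ <-; exists x. Qed.

Definition Cx (x : X) : @path_components R X := exist _ (comp_of x) (mem_set (comp_in x)).

Definition repr_c (C : @path_components R X) : X :=
  projT1 (comp_mem (projT1 C) (set_mem (projT2 C))).

Lemma repr_cK (C : @path_components R X) : Cx (repr_c C) = C.
Proof.
rewrite /repr_c; case: (comp_mem _) => x /= e.
move: C e => [c hc] /= e; subst c.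
by rewrite /Cx; congr exist; exact: eq_irrelevance.
Qed.

Lemma Cx_eq (x y : X) : Cx x = Cx y <-> pc x y.
Proof.
rewrite -comp_eq; split=> [e|e].
  by have := congr1 (@proj1_sig _ _) e.
by rewrite /Cx; move: (mem_set (comp_in x)) (mem_set (comp_in y)); rewrite e => a b;
  congr exist; exact: eq_irrelevance.
Qed.

Lemma pc_repr (C : @path_components R X) (x : X) : C = Cx x -> pc (repr_c C) x.
Proof. by move=> e; apply/Cx_eq; rewrite repr_cK. Qed.
End Comps.

Section Card.
Context {R : realType}.
Local Open Scope card_scope.

Lemma comp_le (X Y : topologicalType) (Phi : X -> Y) :
  continuous Phi ->
  (forall x x', @path_conn R Y (Phi x) (Phi x') -> @path_conn R X x x') ->
  @path_components R X #<= @path_components R Y.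
Proof.
move=> cPhi hinj; apply/card_leP/injfunPex.
exists (fun C => Cx (Phi (repr_c C))) => // C C' _ _ /Cx_eq e.
by rewrite -(repr_cK C) -(repr_cK C'); apply/Cx_eq/hinj.
Qed.
End Card.

Section Conv.
Context {R : realType} {X Y : topologicalType} (f : X -> R) (g : Y -> R)
  (Bf Bg : R) (hf : forall x, `|f x| <= Bf) (hg : forall y, `|g y| <= Bg).

Lemma eabs_infl (r : R) : eabsdiff +oo%E r%:E = +oo%E.
Proof. by rewrite /eabsdiff /=. Qed.

Lemma eabs_infr (r : R) : eabsdiff r%:E +oo%E = +oo%E.
Proof. by rewrite /eabsdiff /=. Qed.

Lemma half_infty : ((2^-1)%:E * +oo)%E = +oo%E :> \bar R.
Proof. by rewrite gt0_muley // lte_fin invr_gt0. Qed.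

Lemma dist_inj (Phi : X -> Y) (Psi : Y -> X) :
  (distortion f g Phi Psi < +oo)%E ->
  (forall x x', @path_conn R Y (Phi x) (Phi x') -> @path_conn R X x x') /\
  (forall y y', @path_conn R X (Psi y) (Psi y') -> @path_conn R Y y y').
Proof.
move=> hD; split.
- move=> x x' hp; have [//|npc] := pselect (@path_conn R X x x').
  have [r [er _]] := rd_fin g Bg hg _ _ hp.
  have ei := rd_inf f _ _ npc.
  have : ((2^-1)%:E * eabsdiff (reeb_dist f x x') (reeb_dist g (Phi x) (Phi x'))
      <= distortion f g Phi Psi)%E.
    by apply: ereal_sup_ubound; exists ((x, Phi x), (x', Phi x')) => //; split; left.
  by rewrite ei er eabs_infl half_infty leye_eq => /eqP e; move: hD; rewrite e ltxx.
- move=> y y' hp; have [//|npc] := pselect (@path_conn R Y y y').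
  have [r [er _]] := rd_fin f Bf hf _ _ hp.
  have ei := rd_inf g _ _ npc.
  have : ((2^-1)%:E * eabsdiff (reeb_dist f (Psi y) (Psi y')) (reeb_dist g y y')
      <= distortion f g Phi Psi)%E.
    by apply: ereal_sup_ubound; exists ((Psi y, y), (Psi y', y')) => //; split; right.
  by rewrite ei er eabs_infr half_infty leye_eq => /eqP e; move: hD; rewrite e ltxx.
Qed.
End Conv.

Section Constr.
Context {R : realType} {X Y : topologicalType} (f : X -> R) (g : Y -> R)
  (Bf Bg : R) (Bf0 : 0 <= Bf) (Bg0 : 0 <= Bg)
  (hf : forall x, `|f x| <= Bf) (hg : forall y, `|g y| <= Bg)
  (cf : constructible_reeb f) (cg : constructible_reeb g).
Local Open Scope card_scope.
Local Notation CX := (@Cx R X).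
Local Notation CY := (@Cx R Y).
Local Notation pcX := (@path_conn R X).
Local Notation pcY := (@path_conn R Y).

Lemma construct :
  (@path_components R X #= @path_components R Y) ->
  exists PP : (X -> Y) * (Y -> X), [/\ continuous PP.1, continuous PP.2 &
   (maxe (distortion f g PP.1 PP.2)
         (maxe (sup_dist f (g \o PP.1)) (sup_dist (f \o PP.2) g)) <= (Bf + Bg)%:E)%E].
Proof.
move=> /card_bijP [sig [tau sK tK]].
have [Phi [hPhi ePhi]] : {Phi : X -> Y | (forall x, CY (Phi x) = sig (CX x)) /\
    (forall x x', CX x = CX x' -> Phi x = Phi x')}.
  exists (fun x => @repr_c R Y (sig (CX x))); split; first by move=> x; exact: repr_cK.
  by move=> x x' /= ->.
have [Psi [hPsi ePsi]] : {Psi : Y -> X | (forall y, CX (Psi y) = tau (CY y)) /\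
    (forall y y', CY y = CY y' -> Psi y = Psi y')}.
  exists (fun y => @repr_c R X (tau (CY y))); split; first by move=> y; exact: repr_cK.
  by move=> y y' /= ->.
have cons x y : (y = Phi x \/ x = Psi y) -> CY y = sig (CX x).
  by case=> ->; [rewrite hPhi | rewrite hPsi tK].
have equiv x y x' y' : (y = Phi x \/ x = Psi y) -> (y' = Phi x' \/ x' = Psi y') ->
    pcX x x' <-> pcY y y'.
  move=> G G'; rewrite -Cx_eq -Cx_eq (cons _ _ G) (cons _ _ G').
  by split=> [->//|] => /(congr1 tau); rewrite !sK.
exists (Phi, Psi); split.
- by apply: (@cr_cont R X Y f Phi cf) => x x' /Cx_eq /ePhi.
- by apply: (@cr_cont R Y X g Psi cg) => y y' /Cx_eq /ePsi.
rewrite !ge_max; apply/and3P; split.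
- apply/ereal_supP => _ [[[x y] [x' y']] [/= Ga Ga'] <-] /=.
  have E := equiv _ _ _ _ Ga Ga'.
  have [p|np] := pselect (pcX x x').
    have [r [-> /andP[r0 r1]]] := rd_fin f Bf hf _ _ p.
    have [r' [-> /andP[r0' r1']]] := rd_fin g Bg hg _ _ (E.1 p).
    have -> : eabsdiff r%:E r'%:E = `|r - r'|%:E by [].
    rewrite -EFinM lee_fin.
    have : `|r - r'| <= 2 * (Bf + Bg) by rewrite ler_norml; apply/andP; split; lra.
    lra.
  have np' : ~ pcY y y' by move=> /E.2.
  rewrite (rd_inf f _ _ np) (rd_inf g _ _ np') /eabsdiff /= mule0 lee_fin.
  exact: addr_ge0.
- apply/ereal_supP => _ [z _ <-]; rewrite lee_fin /=.
  have := hf z; have := hg (Phi z); rewrite !ler_norml => /andP[a1 a2] /andP[b1 b2].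
  by apply/andP; split; lra.
- apply/ereal_supP => _ [z _ <-]; rewrite lee_fin /=.
  have := hf (Psi z); have := hg z; rewrite !ler_norml => /andP[a1 a2] /andP[b1 b2].
  by apply/andP; split; lra.
Qed.
End Constr.

Local Open Scope classical_set_scope.
Local Open Scope ereal_scope.
Local Open Scope card_scope.

Theorem mainTheorem14 (R : realType) (X Y : topologicalType)
  (f : X -> R) (g : Y -> R) :
  constructible_reeb f -> constructible_reeb g ->
  (d_FD f g = +oo <-> ~ (@path_components R X #= @path_components R Y)).
Proof.
move=> cf cg.
have [Bf [Bf0 hf]] := cr_bound _ _ cf.
have [Bg [Bg0 hg]] := cr_bound _ _ cg.
split.
- move=> hD heq.
  have [PP [c1 c2 hle]] := construct f g Bf Bg Bf0 Bg0 hf hg cf cg heq.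
  have : d_FD f g <= maxe (distortion f g PP.1 PP.2)
         (maxe (sup_dist f (g \o PP.1)) (sup_dist (f \o PP.2) g)).
    by apply: ereal_inf_lbound; exists PP.
  rewrite hD leye_eq => /eqP e.
  by move: hle; rewrite e leye_eq.
- move=> hne; apply/eqP; rewrite -leye_eq.
  apply/ereal_infP => _ [[Phi Psi] [/= c1 c2] <-] /=.
  rewrite leye_eq; apply/eqP.
  case: (pselect (maxe (distortion f g Phi Psi)
         (maxe (sup_dist f (g \o Phi)) (sup_dist (f \o Psi) g)) = +oo)) => // hm.
  exfalso; apply: hne.
  have hm' : maxe (distortion f g Phi Psi)
         (maxe (sup_dist f (g \o Phi)) (sup_dist (f \o Psi) g)) < +oo.
    by rewrite ltey; apply/eqP.
  have hD : distortion f g Phi Psi < +oo.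
    by apply: le_lt_trans hm'; rewrite le_max lexx.
  have [i1 i2] := dist_inj f g Bf Bg hf hg Phi Psi hD.
  by apply: Cantor_Bernstein; [exact: (@comp_le R _ _ _ c1 i1) | exact: (@comp_le R _ _ _ c2 i2)].
Qed.
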